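(* For every $\rho<\infty$, one can choose $\beta<\infty$ such that $\mathbb{P}(\mathbf{0}\text{ is }(\beta,t)\text{-good})>1-e^{-\rho t}$ for all large enough $t$.
   Context: Fix $\lambda>0$. Graphical construction: for each $x\in\mathbb{Z}$ independent rate-$\lambda$ Poisson processes $U^{x,x+1}$ and $U^{x,x-1}$ of times (infection arrows from $x$ to $x\pm1$) (and rate-$1$ recovery processes, irrelevant here). A $\lambda$-path starting at $(z,s)$ is a finite sequence of space-time points with nondecreasing times starting at $(z,s)$, whose consecutive segments are vertical (staying at a site) or jumps from a site $x'$ to a neighbour $x''$ at a time $u\in U^{x',x''}$. For $\beta,t>0$, $\beta t$ stands for $\lceil\beta t\rceil$, and $(z,s)$ is $(\beta,t)$-good if every $\lambda$-path starting at $(z,s)$ makes fewer than $\beta t$ jumps during $[s,s+t]$. $\mathbf{0}=(0,0)$. *)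

(* Defs.v *)
From HB Require Import structures.
From mathcomp Require Import all_boot all_order all_algebra.
From mathcomp Require Import all_classical all_reals all_analysis.
Set Implicit Arguments. Unset Strict Implicit. Unset Printing Implicit Defensive.
Import Order.TTheory GRing.Theory Num.Theory.
Local Open Scope classical_set_scope.
Local Open Scope ring_scope.

Section GraphicalConstruction.
Variable R : realType.

(* Infection arrows: [A x true] = U^{x,x+1}, [A x false] = U^{x,x-1}
   (sets of arrival times).  A space-time point is (site, time). *)
Definition arrows := int -> bool -> set R.

Fixpoint lam_path (A : arrows) (p : int * R) (s : seq (int * R)) : Prop :=
  match s with
  | [::] => True
  | q :: s' =>
      ((q.1 = p.1 /\ p.2 <= q.2)
       \/ (q.2 = p.2 /\
           ((q.1 = p.1 + 1 /\ A p.1 true p.2) \/ (q.1 = p.1 - 1 /\ A p.1 false p.2))))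
      /\ lam_path A q s'
  end.

Fixpoint jumps_in (a b : R) (p : int * R) (s : seq (int * R)) : nat :=
  match s with
  | [::] => 0%N
  | q :: s' => ((q.1 != p.1) && (a <= p.2 <= b)) + jumps_in a b q s'
  end.

Definition good (A : arrows) (beta t : R) (z : int) (s : R) : Prop :=
  forall path : seq (int * R), lam_path A (z, s) path ->
    ((jumps_in s (s + t) (z, s) path)%:Z < Num.ceil (beta * t))%R.

Definition count_eq (A : set R) (a b : R) (n : nat) : Prop :=
  exists s : seq R, uniq s /\ size s = n /\ forall u, (u \in s) <-> (A u /\ a < u <= b).

(* a cell ((x,dir),(a,b),n): "the process U^{x,x+-1} has n points in (a,b]" *)
Definition cell := ((int * bool) * (R * R) * nat)%type.

Definition cells_disjoint (c c' : cell) : bool :=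
  (c.1.1 != c'.1.1) || (c.1.2.2 <= c'.1.2.1) || (c'.1.2.2 <= c.1.2.1).

Definition poisson_pmf (mu : R) (n : nat) : R := expR (- mu) * mu ^+ n / (n`!)%:R.

Definition cells_event (T : Type) (U : T -> arrows) (cs : seq cell) : set T :=
  [set w | forall c, c \in cs -> count_eq (U w c.1.1.1 c.1.1.2) c.1.2.1 c.1.2.2 c.2].

End GraphicalConstruction.

(* U : Omega -> arrows is a family of independent rate-lam Poisson processes
   (indexed by the directed edges (x, x+-1)) under P: for every finite family
   of pairwise disjoint space-time cells (distinct edges or disjoint time
   intervals), the joint event that the counts equal prescribed values is
   measurable and has the product of Poisson(lam * length) probabilities. *)
Definition poisson_arrows (R : realType) (d : measure_display)
  (Omega : measurableType d) (P : probability Omega R) (lam : R)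
  (U : Omega -> arrows R) : Prop :=
  forall cs : seq (cell R),
    all (fun c => c.1.2.1 <= c.1.2.2) cs ->
    pairwise (@cells_disjoint R) cs ->
    measurable (cells_event U cs) /\
    P (cells_event U cs) =
      (\prod_(c <- cs) poisson_pmf (lam * (c.1.2.2 - c.1.2.1)) c.2)%:E.

(* Main.v *)
Require Import Defs.
From HB Require Import structures.
From mathcomp Require Import all_boot all_order all_algebra.
From mathcomp Require Import all_classical all_reals all_analysis.
From mathcomp Require Import ring lra zify.
Import Order.TTheory GRing.Theory Num.Theory.
Local Open Scope classical_set_scope.
Local Open Scope ring_scope.

Lemma memY (x : int) (kk m : nat) : (`|x|%N + m.+1 <= kk)%N ->
  x \in [seq (i%:Z - kk%:Z)%R | i <- iota 0 (2 * kk + 1)].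
Proof. move=> H; apply/mapP; exists (absz (x + kk%:Z)%R); [rewrite mem_iota; lia| lia]. Qed.

Lemma memY' (x : int) (kk m : nat) : (`|x|%N + m.+1 <= kk)%N ->
  (x - 1)%R \in [seq (i%:Z - kk%:Z)%R | i <- iota 0 (2 * kk + 1)].
Proof. move=> H; apply/mapP; exists (absz (x - 1 + kk%:Z)%R); [rewrite mem_iota; lia| lia]. Qed.

Lemma memC (c n : nat) : (c <= n)%N -> c \in iota 0 n.+1.
Proof. by move=> H; rewrite mem_iota add0n ltnS. Qed.

Section Main.
Variables (R : realType) (d : measure_display) (Omega : measurableType d)
  (P : probability Omega R) (lam : R) (U : Omega -> arrows R).
Hypothesis PA : poisson_arrows P lam U.
Variable h : R.
Hypothesis h_gt0 : 0 < h.
Hypothesis lam_ge0 : 0 <= lam.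

Definition trip := ((int * bool) * nat)%type.
Definition cl (c : trip) (n : nat) : cell R :=
  (c.1, (h * (c.2%:R - 1), h * c.2%:R), n).
Definition Zc (c : trip) := cells_event U [:: cl c 0].
Definition Nc (c : trip) := ~` Zc c.
Definition Epos (L : seq trip) := \big[setI/setT]_(c <- L) Nc c.
Definition Ez (Z : seq trip) := cells_event U [seq cl c 0 | c <- Z].
Definition tdisj (a b : trip) := (a.1 != b.1) || (a.2 != b.2).

Lemma tdisjC : symmetric tdisj.
Proof. by move=> a b; rewrite /tdisj eq_sym [b.2 == _]eq_sym. Qed.

Lemma cl_disj a b n m : tdisj a b -> cells_disjoint (cl a n) (cl b m).
Proof.
rewrite /tdisj /cells_disjoint /cl /=; case/orP => [->//|].
rewrite -orbA neq_ltn => /orP[] H; apply/orP; right; apply/orP;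
  [left|right]; rewrite ler_pM2l // lerBrDr natr1 ler_nat; exact: H.
Qed.

Lemma Ez_ok Z : pairwise tdisj Z ->
  measurable (Ez Z) /\ P (Ez Z) = ((expR (- (lam * h))) ^+ size Z)%:E.
Proof.
move=> pw; have [] := PA [seq cl c 0 | c <- Z].
- apply/allP => c /mapP [c' _ ->] /=; rewrite ler_pM2l // lerBlDr lerDl //.
- rewrite pairwise_map; apply: sub_pairwise pw => a b; exact: cl_disj.
move=> mE PE; split => //; rewrite /Ez PE big_map; congr (_%:E).
rewrite (eq_bigr (fun=> expR (- (lam * h)))); last first.
  by move=> c _; rewrite /Defs.poisson_pmf /= expr0 mulr1 fact0 divr1; congr (expR (- _)); ring.
by rewrite big_const_seq count_predT; elim: (size Z) => //= k ->; rewrite exprS.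
Qed.

Lemma Zc_m c : measurable (Zc c).
Proof. by have [] := @Ez_ok [:: c]. Qed.
Lemma Nc_m c : measurable (Nc c).
Proof. exact/measurableC/Zc_m. Qed.
Lemma Epos_m L : measurable (Epos L).
Proof. by rewrite /Epos; elim: L => [|c L IH]; rewrite ?big_nil ?big_cons //; apply: measurableI => //; apply: Nc_m. Qed.

Let z := expR (- (lam * h)).
Let q := 1 - z.

Lemma Ez_cons c Z : Ez (c :: Z) = Zc c `&` Ez Z.
Proof.
rewrite /Ez /Zc /cells_event /=; apply/seteqP; split => w /=.
  move=> H; split => c0 Hc; apply: H; move: Hc; rewrite !inE => ->//; exact: orbT.
by move=> [H1 H2] c0; rewrite inE => /orP[/eqP->|]; [apply: H1; rewrite inE|apply: H2].
Qed.

Lemma pw_move (c : trip) L Z : pairwise tdisj (c :: L ++ Z) -> pairwise tdisj (L ++ c :: Z).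
Proof.
elim: L => [//|x L IH] /= /andP[/andP[cx cLZ] /andP[xLZ pLZ]].
rewrite all_cat /= (tdisjC x c) cx /=; rewrite all_cat in xLZ.
case/andP: xLZ => -> -> /=; apply: IH; by rewrite /= cLZ pLZ.
Qed.

Lemma base L Z : pairwise tdisj (L ++ Z) ->
  P (Epos L `&` Ez Z) = (q ^+ size L * z ^+ size Z)%:E.
Proof.
elim: L Z => [|c L IH] Z.
  move=> pw; rewrite /Epos big_nil setTI expr0 mul1r; by rewrite (Ez_ok _ pw).2.

rewrite /= => /andP[hc pw].
have pw1 : pairwise tdisj (L ++ Z) by [].
have pw2 : pairwise tdisj (L ++ c :: Z) by apply: pw_move; rewrite /= hc.
have -> : Epos (c :: L) `&` Ez Z = (Epos L `&` Ez Z) `\` Zc c.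
  rewrite /Epos big_cons /Nc; apply/seteqP; split => w /=; tauto.
have pwZ : pairwise tdisj Z by move: pw1; rewrite pairwise_cat => /and3P[].
have mX : measurable (Epos L `&` Ez Z).
  by apply: measurableI; [exact: Epos_m| exact: (Ez_ok _ pwZ).1].
rewrite measureD //; last first.
  by rewrite (le_lt_trans (probability_le1 _ _)) ?ltry.
  exact: Zc_m.
have -> : Epos L `&` Ez Z `&` Zc c = Epos L `&` Ez (c :: Z).
  by rewrite Ez_cons; apply/seteqP; split => w /=; tauto.
rewrite [X in (X - _)%E](IH Z pw1) [X in (_ - X)%E](IH (c :: Z) pw2) /= -EFinB; congr (_%:E); rewrite /q exprS exprS; ring.
Qed.

Lemma sub_bigU (I : Type) (s : seq I) (F : I -> set Omega) :
  (forall i, measurable (F i)) ->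
  (P (\big[setU/set0]_(i <- s) F i) <= \sum_(i <- s) P (F i))%E.
Proof.
move=> mF; elim: s => [|i s IH]; first by rewrite !big_nil measure0.
rewrite !big_cons; apply: le_trans (measureU2 _ _ _) _ => //.
  by apply: bigsetU_measurable => k _.
exact: leeD2l.
Qed.

Lemma bigU_seqP (I : eqType) (s : seq I) (F : I -> set Omega) w :
  (\big[setU/set0]_(i <- s) F i) w <-> exists i, i \in s /\ F i w.
Proof.
elim: s => [|i s IH]; first by rewrite big_nil; split => [[]|[? []]].
rewrite big_cons; split.
  case => [H|/IH [k [ks Fk]]]; first by exists i; rewrite inE eqxx.
  by exists k; rewrite inE ks orbT.
case=> k []; rewrite inE => /orP[/eqP -> H|ks Fk]; [by left|right; apply/IH; by exists k].
Qed.

Definition sg (b : bool) : int := if b then 1 else -1.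

Fixpoint Ch (N m : nat) (x : int) (j : nat) : set Omega :=
  match m with
  | 0 => setT
  | m'.+1 => \big[setU/set0]_(i <- iota 0 (N - j))
      \big[setU/set0]_(b <- [:: true; false])
        (Nc ((x, b), (j + i)%N) `&` Ch N m' (x + sg b) (j + i).+1)
  end.

Lemma Ch_m N m x j : measurable (Ch N m x j).
Proof.
elim: m x j => [//|m IH] x j /=.
  exact: measurableT.
apply: bigsetU_measurable => i _; apply: bigsetU_measurable => b _.
by apply: measurableI; [exact: Nc_m|exact: IH].
Qed.

Lemma geo (a : R) M : 0 < a ->
  a * \sum_(i <- iota 0 M) (1 + a) ^+ (M - i.+1) + 1 <= (1 + a) ^+ M.
Proof.
move=> a0; elim: M => [|M IH]; first by rewrite big_nil mulr0 expr0 add0r.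
rewrite -addn1 iotaD big_cat /= big_cons big_nil addr0 addn1.
have -> : \sum_(i <- iota 0 M) (1 + a) ^+ (M.+1 - i.+1) =
   (1 + a) * \sum_(i <- iota 0 M) (1 + a) ^+ (M - i.+1).
  rewrite mulr_sumr big_seq_cond [RHS]big_seq_cond; apply: eq_bigr => i.
  rewrite andbT mem_iota add0n => Hi; rewrite -exprS subSS; congr (_ ^+ _).
  by rewrite subnSK.
rewrite subnn expr0 mulrDr mulrA (mulrC a (1 + a)) -mulrA exprS.
have ha : 0 <= 1 + a by lra.
have := ler_wpM2l ha IH; lra.
Qed.


Lemma q_ge0 : 0 <= q.
Proof. rewrite /q /z subr_ge0 expR_le1 oppr_le0; exact: mulr_ge0 (ltW h_gt0). Qed.

Lemma Ez_nil : Ez [::] = setT.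
Proof. by apply/seteqP; split => w //= _ c. Qed.

Lemma Ch_bound N (a : R) : 0 < a -> forall m L x j, pairwise tdisj L ->
  all (fun c : trip => (c.2 < j)%N) L ->
  (P (Epos L `&` Ch N m x j) <=
     (q ^+ size L * (2 * q / a) ^+ m * (1 + a) ^+ (N - j))%:E)%E.
Proof.
move=> a0; elim=> [|m IH] L x j pw lj.
  have pw0 : pairwise tdisj (L ++ [::]) by rewrite cats0.
  rewrite /= setIT -[Epos L]setIT -Ez_nil [X in (X <= _)%E](base L [::] pw0).
  rewrite lee_fin expr0 !mulr1; apply: ler_peMr; first exact: exprn_ge0 q_ge0.
  by apply: exprn_ege1; lra.
apply: (@le_trans _ _ (P (\big[setU/set0]_(i <- iota 0 (N - j))
      \big[setU/set0]_(b <- [:: true; false])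
        (Epos (((x, b), (j + i)%N) :: L) `&` Ch N m (x + sg b) (j + i).+1)))).
  apply: le_measure; rewrite ?inE.
  - apply: measurableI; [exact: Epos_m| exact: (Ch_m N m.+1 x j)].
  - apply: bigsetU_measurable => i _; apply: bigsetU_measurable => b _.
    by apply: measurableI; [exact: Epos_m|exact: Ch_m].
  move=> w /= [wL] /bigU_seqP [i [iI /bigU_seqP [b [bI [wN wC]]]]].
  apply/bigU_seqP; exists i; split => //; apply/bigU_seqP; exists b; split => //.
  by rewrite /Epos big_cons.
apply: le_trans; first apply: sub_bigU => i.
  apply: bigsetU_measurable => b _.
  by apply: measurableI; [exact: Epos_m|exact: Ch_m].
apply: (@le_trans _ _ (\sum_(i <- iota 0 (N - j))
   (2 * (q ^+ (size L).+1 * (2 * q / a) ^+ m * (1 + a) ^+ (N - j - i.+1)))%:E)%E).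
  rewrite big_seq [X in (_ <= X)%E]big_seq; apply: lee_sum => i; rewrite mem_iota add0n => /andP[_ iM].
  apply: le_trans; first apply: sub_bigU => b.
    by apply: measurableI; [exact: Epos_m|exact: Ch_m].
  rewrite big_cons big_cons big_nil adde0 mulr_natl mulr2n EFinD.
  have pw' b : pairwise tdisj (((x, b), (j + i)%N) :: L).
    rewrite /= pw andbT; apply/allP => c cL; rewrite /tdisj /=; apply/orP; right.
    have := allP lj c cL; rewrite neq_ltn => H; apply/orP; right.
    lia.
  have lj' b : all (fun c : trip => (c.2 < (j + i).+1)%N) (((x, b), (j + i)%N) :: L).
    rewrite /= ltnSn /=; apply/allP => c cL; have := allP lj c cL => H.
    lia.
  have E : (N - (j + i).+1 = N - j - i.+1)%N by lia.
  by apply: leeD; [have := IH _ (x + sg true) _ (pw' true) (lj' true)|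
     have := IH _ (x + sg false) _ (pw' false) (lj' false)]; rewrite /= E.
rewrite sumEFin lee_fin -mulr_sumr.
have H := @geo a (N - j)%N a0.
have -> : \sum_(i <- iota 0 (N - j)) q ^+ (size L).+1 * (2 * q / a) ^+ m * (1 + a) ^+ (N - j - i.+1)
   = q ^+ (size L).+1 * (2 * q / a) ^+ m * \sum_(i <- iota 0 (N - j)) (1 + a) ^+ (N - j - i.+1).
  by rewrite mulr_sumr.
set S := \sum_(i <- _) _ in H *.
have S0 : 0 <= S by apply: sumr_ge0 => i _; apply: exprn_ge0; lra.
have qq : 0 <= q ^+ size L * (2 * q / a) ^+ m.
  by apply: mulr_ge0; apply: exprn_ge0; [exact: q_ge0|apply: divr_ge0; [have := q_ge0; lra|lra]].
have -> : 2 * (q ^+ (size L).+1 * (2 * q / a) ^+ m * S) =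
   (q ^+ size L * (2 * q / a) ^+ m) * (2 * q / a) * (a * S).
  rewrite exprS; field; lra.
have K0 : 0 <= q ^+ size L * (2 * q / a) ^+ m * (2 * q / a).
  by apply: mulr_ge0 => //; apply: divr_ge0; [have := q_ge0; lra|lra].
rewrite exprSr (mulrA (q ^+ size L)).
nra.
Qed.


Lemma bigU_const (I : Type) (s : seq I) (F : I -> set Omega) (r : R) :
  (forall i, measurable (F i)) -> (forall i, (P (F i) <= r%:E)%E) ->
  (P (\big[setU/set0]_(i <- s) F i) <= ((size s)%:R * r)%:E)%E.
Proof.
move=> mF PF; apply: le_trans; first exact: sub_bigU.
apply: (@le_trans _ _ (\sum_(i <- s) r%:E)%E); first by apply: lee_sum => i _.
rewrite sumEFin lee_fin big_const_seq count_predT.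
by elim: (size s) => [|k IH] /=; [rewrite mul0r|move: IH; rewrite -natr1 mulrDl mul1r; lra].
Qed.

Definition bools := [:: true; false].

Definition Bad2 (kk N : nat) : set Omega :=
  \big[setU/set0]_(y <- [seq (i%:Z - kk%:Z) | i <- iota 0 (2 * kk + 1)])
  \big[setU/set0]_(jj <- iota 0 N)
  \big[setU/set0]_(b <- bools) \big[setU/set0]_(b' <- bools)
    (Nc ((y, b), jj) `&` Nc ((y + 1, b'), jj)).

Lemma Bad2_m kk N : measurable (Bad2 kk N).
Proof.
apply: bigsetU_measurable => y _; apply: bigsetU_measurable => jj _.
apply: bigsetU_measurable => b _; apply: bigsetU_measurable => b' _.
by apply: measurableI; exact: Nc_m.
Qed.

Lemma Bad2_bound kk N :
  (P (Bad2 kk N) <= ((2 * kk + 1)%:R * (N%:R * (2%:R * (2%:R * q ^+ 2))))%:E)%E.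
Proof.
rewrite /Bad2; apply: le_trans; first apply: (bigU_const _ _ _ (N%:R * (2%:R * (2%:R * q ^+ 2)))).
- move=> y; apply: bigsetU_measurable => jj _.
  apply: bigsetU_measurable => b _; apply: bigsetU_measurable => b' _.
  by apply: measurableI; exact: Nc_m.
- move=> y; apply: le_trans; first apply: (bigU_const _ _ _ (2%:R * (2%:R * q ^+ 2))); last by rewrite size_iota.
    move=> jj; apply: bigsetU_measurable => b _; apply: bigsetU_measurable => b' _.
    by apply: measurableI; exact: Nc_m.
  move=> jj; apply: bigU_const.
    move=> b; apply: bigsetU_measurable => b' _.
    by apply: measurableI; exact: Nc_m.
  move=> b; apply: bigU_const; first by move=> b'; apply: measurableI; exact: Nc_m.
  move=> b'; have pw : pairwise tdisj ([:: (y, b, jj); (y + 1, b', jj)] ++ [::]).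
    rewrite /= /tdisj /= andbT; have -> // : (y, b) != (y + 1, b').
    by apply/eqP; case => E _; move: E; lia.
  have := base _ _ pw; rewrite /Epos big_cons big_cons big_nil setIT Ez_nil setIT => ->.
  by rewrite lee_fin /= expr0 mulr1.
by rewrite size_map size_iota.
Qed.


Lemma cellP (t : R) (n : nat) : h * n%:R = t -> forall u, 0 <= u -> u <= t ->
  exists c : nat, (c <= n)%N /\ h * (c%:R - 1) < u /\ u <= h * c%:R.
Proof.
move=> ht u u0 ut; set c := Num.ceil (u / h).
have uh0 : 0 <= u / h by apply: divr_ge0 => //; exact: ltW.
have c0 : 0 <= c by rewrite /c ceil_ge0; lra.
have cE : (`|c|%N)%:R = c%:~R :> R by rewrite natr_absz ger0_norm.
have [i1 i2] := andP (ceil_itv (u / h)).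
exists `|c|%N; split; [|split].
- have : (c <= n%:Z) by rewrite /c ceil_le_int ler_pdivrMr // mulrC ht.
  by move: c0; lia.
- by rewrite cE -ltr_pdivlMl // mulrC; move: i1; rewrite rmorphB.
- by rewrite cE -ler_pdivrMl // mulrC.
Qed.

Lemma cell_mono (u u' : R) (c c' : nat) : u <= u' -> h * (c%:R - 1) < u ->
  u' <= h * c'%:R -> (c <= c')%N.
Proof.
move=> uu' cu uc'; rewrite leqNgt; apply/negP => H.
have : c'%:R <= c%:R - 1 :> R by rewrite lerBrDr natr1 ler_nat.
move=> H2; have := ler_wpM2l (ltW h_gt0) H2; lra.
Qed.

Lemma Nc_arrow w (x : int) b c u : U w x b u -> h * (c%:R - 1) < u -> u <= h * c%:R ->
  Nc ((x, b), c) w.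
Proof.
move=> Au c1 c2; rewrite /Nc /Zc /cells_event /= => H.
have := H (cl ((x, b), c) 0); rewrite inE eqxx => /(_ isT) [s [_ [/size0nil E H']]].
suff : u \in s by rewrite E in_nil.
apply/H'; split => //; apply/andP; split.
exact: c1.
exact: c2.
Qed.

Lemma jumps_zero (A : arrows R) (t : R) p s : lam_path A p s -> t < p.2 ->
  jumps_in 0 t p s = 0%N.
Proof.
elim: s p => [//|p' s IH] p /= [H1 H2] tp.
have tq : t < p'.2 by case: H1 => [[_ ?]|[-> _]]; lra.
have -> : (0 <= p.2 <= t) = false by apply/negP => /andP[_]; lra.
by rewrite andbF IH.
Qed.


Lemma det (t : R) (n kk : nat) (ht : h * n%:R = t) w : ~ Bad2 kk n.+1 w ->
  forall s p j m, lam_path (U w) p s -> 0 <= p.2 ->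
  (forall b u c, p.2 <= u -> u <= t -> U w p.1 b u -> h * (c%:R - 1) < u ->
     u <= h * c%:R -> (j <= c)%N) ->
  (`|p.1|%N + m <= kk)%N -> (m <= jumps_in 0 t p s)%N -> Ch n.+1 m p.1 j w.
Proof.
move=> nB; elim=> [|p' s IH] p j m.
  by move=> _ _ _ _; rewrite leqn0 => /eqP ->.
move=> /= [H1 H2] p0 Inv box.
case: H1 => [[e1 e2]|[e2 Hj]].
  rewrite e1 eqxx /= add0n => hm; rewrite -e1; apply: IH => //.
  - lra.
  - move=> b u c pu ut; rewrite e1 => Au c1 c2; apply: (Inv b u c) => //; lra.
  - by rewrite e1.
have [b [eb Ab]] : exists b, p'.1 = p.1 + sg b /\ U w p.1 b p.2.
  by case: Hj => [[-> ?]|[-> ?]]; [exists true|exists false].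
have ne : (p'.1 != p.1) by rewrite eb; case: (b) => /=; apply/negP => /eqP; lia.
rewrite ne /=.
have [pt|tp] := leP p.2 t; last first.
  by rewrite andbF /= (jumps_zero _ _ _ _ H2) ?e2 // leqn0 => /eqP ->.
rewrite p0 /= add1n.
case: m box => [//|m] box; rewrite ltnS => hm.
have [c [cn [c1 c2]]] := cellP _ _ ht _ p0 pt.
have jc := Inv b p.2 c (lexx _) pt Ab c1 c2.
rewrite /=; apply/bigU_seqP; exists (c - j)%N; split.
  rewrite mem_iota add0n; lia.
apply/bigU_seqP; exists b; split; first by case: (b).
rewrite subnKC //; split; first exact: (Nc_arrow _ _ _ _ _ Ab c1 c2).
rewrite -eb; apply: IH => //.
- by rewrite e2.
- move=> b' u c' pu ut Au c1' c2'; rewrite e2 in pu.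
  have cc' := cell_mono _ _ _ _ pu c1 c2'.
  case: (ltngtP c c') => [//|c'c|ec]; first by move: cc'; rewrite leqNgt c'c.
  exfalso; apply: nB; rewrite /Bad2; rewrite -ec in c1' c2'.
  have N1 := Nc_arrow _ _ _ _ _ Ab c1 c2; have N2 := Nc_arrow _ _ _ _ _ Au c1' c2'.
  move: N2 Ab N1 box {Inv ne}; rewrite eb; case: (b) => N2 Ab N1 box.
  + apply/bigU_seqP; exists p.1; split; first exact: memY box.
    apply/bigU_seqP; exists c; split; first exact: memC.
    apply/bigU_seqP; exists true; split => //.
    by apply/bigU_seqP; exists b'; split; [case: (b')|].
  + apply/bigU_seqP; exists (p.1 - 1); split; first exact: memY' box.
    apply/bigU_seqP; exists c; split; first exact: memC.
    apply/bigU_seqP; exists b'; split; first by case: (b').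
    apply/bigU_seqP; exists false; split => //.
    by rewrite subrK.
- by rewrite eb; case: (b) => /=; lia.
Qed.

End Main.

Theorem lemma7 (R : realType) (d : measure_display) (Omega : measurableType d)
  (P : probability Omega R) (lam : R) (U : Omega -> arrows R) :
  0 < lam -> poisson_arrows P lam U ->
  forall rho : R, exists beta : R, exists T : R, forall t : R, T <= t ->
    exists G : set Omega, measurable G /\
      G `<=` [set w | good (U w) beta t 0 0] /\
      ((1 - expR (- (rho * t)))%:E < P G)%E.
Proof.
move=> lam0 PA rho.
have l0 : 0 <= lam by exact: ltW.
set e := expR (1 : R).
have e2 : 2 <= e by have := expR_ge1Dx (1 : R); rewrite /e; lra.
pose beta := 4 * e * lam + `|rho| + 2.
exists beta, 1 => t t1.
have t0 : 0 < t by lra.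
have el : 0 <= e * lam by apply: mulr_ge0; lra.
have beta0 : 0 < beta by have := normr_ge0 rho; rewrite /beta; lra.
set kz := Num.ceil (beta * t).
have kz1 : 0 < kz by rewrite /kz ceil_gt0; exact: mulr_gt0.
set kk := `|kz|%N.
have kkE : kk%:R = kz%:~R :> R by rewrite natr_absz ger0_norm // ltW.
have kkb : beta * t <= kk%:R by rewrite kkE /kz ceil_ge.
set E := expR (- (rho * t)).
have E0 : 0 < E by exact: expR_gt0.
have EE : E * expR (rho * t) = 1 by rewrite /E expRN mulVf // gt_eqF // expR_gt0.
set X := (2 * kk + 1)%:R * lam ^+ 2 * t ^+ 2 : R.
have X0 : 0 <= X by apply: mulr_ge0; [apply: mulr_ge0 => //; exact: sqr_ge0| exact: sqr_ge0].
set K := 16 * X * expR (rho * t).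
have K0 : 0 <= K by apply: mulr_ge0; [apply: mulr_ge0 => //|exact: expR_ge0].
set n := (Num.Def.archi_bound K).+1.
have Kn : K < n%:R by apply: lt_le_trans (archi_boundP K0) _; rewrite ler_nat.
have n1 : (1 <= n)%N by [].
have nR : 1 <= n%:R :> R by rewrite ler1n.
set h := t / n%:R.
have h0 : 0 < h by apply: divr_gt0 => //; lra.
have ht : h * n%:R = t by rewrite /h divfK // gt_eqF //; lra.
set B := Ch R d Omega U h n.+1 kk 0 0 `|` Bad2 R d Omega U h kk n.+1.
have mB : measurable B.
  by apply: measurableU; [exact: (Ch_m _ _ _ _ _ _ PA _ h0)|exact: (Bad2_m _ _ _ _ _ _ PA _ h0)].
exists (~` B); split; first exact: measurableC.
split.
  move=> w /= nBw path Hp; rewrite add0r.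
  rewrite ltNge; apply/negP => Hk.
  have Hk' : (kk <= jumps_in (0%R : R) t ((0%R : int), (0%R : R)) path)%N.
    by rewrite -lez_nat gez0_abs ?(ltW kz1).
  have nB2 : ~ Bad2 R d Omega U h kk n.+1 w by move=> H; apply: nBw; right.
  apply: nBw; left.
  apply: (det _ _ _ _ _ _ h0 l0 _ _ _ ht _ nB2 _ _ _ _ Hp) => //=.
set q := 1 - expR (- (lam * h)).
have q0 : 0 <= q by rewrite /q subr_ge0 expR_le1 oppr_le0; apply: mulr_ge0 => //; exact: ltW.
have qlh : q <= lam * h by have := expR_ge1Dx (- (lam * h)); rewrite /q; lra.
set a := 2 * e * lam * h.
have a0 : 0 < a by rewrite /a; apply: mulr_gt0 => //; apply: mulr_gt0 => //; apply: mulr_gt0; lra.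
have B1 : (P (Ch R d Omega U h n.+1 kk 0 0) <= (E * expR (-2))%:E)%E.
  have := Ch_bound _ _ _ _ _ _ PA _ h0 l0 n.+1 _ a0 kk [::] 0 0 isT isT.
  rewrite /Epos big_nil setTI subn0 expr0 mul1r => /le_trans; apply.
  rewrite lee_fin -/q.
  have r0 : 0 <= 2 * q / a by apply: divr_ge0; lra.
  have r1 : 2 * q / a <= expR (-1).
    rewrite expRN -/e ler_pdivrMr // /a.
    have -> : e^-1 * (2 * e * lam * h) = 2 * (lam * h) by field; lra.
    lra.
  have p1 : (2 * q / a) ^+ kk <= expR (-1) ^+ kk.
    by apply: lerXn2r => //; rewrite nnegrE // ltW // expR_gt0.
  have p2 : (1 + a) ^+ n.+1 <= expR a ^+ n.+1.
    apply: lerXn2r; [rewrite nnegrE; lra| rewrite nnegrE; exact: expR_ge0| exact: expR_ge1Dx].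
  rewrite -expRM_natl in p1; rewrite -expRM_natl in p2.
  have ex : kk%:R * -1 + n.+1%:R * a <= - (rho * t) - 2.
    have -> : n.+1%:R * a = 2 * e * lam * t * ((n%:R + 1) / n%:R).
      rewrite /a /h -natr1; field; lra.
    have f1 : (n%:R + 1) / n%:R <= 2 :> R by rewrite ler_pdivrMr; lra.
    have f2 : 2 * e * lam * t * ((n%:R + 1) / n%:R) <= 4 * e * lam * t.
      have : 0 <= 2 * e * lam * t by apply: mulr_ge0; [lra|lra].
      nra.
    have f3 : rho * t <= `|rho| * t by apply: ler_wpM2r; [lra|exact: ler_norm].
    have f4 : 0 <= `|rho| * t by apply: mulr_ge0; [exact: normr_ge0|lra].
    rewrite /beta in kkb; nra.
  have y0 : 0 <= (1 + a) ^+ n.+1 by apply: exprn_ge0; lra.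
  apply: le_trans (ler_pM (exprn_ge0 _ r0) y0 p1 p2) _.
  by rewrite -expRD /E -expRD ler_expR.
have B2 : (P (Bad2 R d Omega U h kk n.+1) <= (E / 2)%:E)%E.
  apply: le_trans (Bad2_bound _ _ _ _ _ _ PA _ h0 l0 kk n.+1) _.
  rewrite lee_fin -/q.
  set Y := (2 * kk + 1)%:R : R.
  have Y0 : 0 <= Y by [].
  have n0 : 0 < n%:R :> R by lra.
  have hq : q ^+ 2 <= lam ^+ 2 * t ^+ 2 / n%:R ^+ 2.
    have -> : lam ^+ 2 * t ^+ 2 / n%:R ^+ 2 = (lam * h) ^+ 2 by rewrite /h; field; lra.
    by apply: lerXn2r; rewrite ?nnegrE //; apply: mulr_ge0 => //; exact: ltW.
  have -> : Y * ((n.+1)%:R * (2 * (2 * q ^+ 2))) = (4 * Y * (n%:R + 1)) * q ^+ 2.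
    by rewrite -natr1; ring.
  have F0 : 0 <= 4 * Y * (n%:R + 1) by apply: mulr_ge0; [apply: mulr_ge0|]; lra.
  apply: le_trans (ler_wpM2l F0 hq) _.
  have -> : 4 * Y * (n%:R + 1) * (lam ^+ 2 * t ^+ 2 / n%:R ^+ 2)
      = (4 * X * (n%:R + 1)) / n%:R ^+ 2 by rewrite /X -/Y; field; lra.
  have n20 : 0 < n%:R ^+ 2 :> R by apply: exprn_gt0.
  rewrite ler_pdivrMr //.
  have kX : 16 * X < E * n%:R.
    have H2 : E * (16 * X * expR (rho * t)) < E * n%:R by rewrite ltr_pM2l.
    have -> : 16 * X = E * (16 * X * expR (rho * t)).
      by rewrite [RHS]mulrCA EE mulr1.
    exact: H2.
  have e1 : 0 <= X * (n%:R - 1) by apply: mulr_ge0; lra.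
  have e3 := ler_wpM2r (ltW n0) (ltW kX).
  rewrite expr2; lra.
have em2 : expR (-2) <= 1 / 3 :> R.
  have h3 := expR_ge1Dx (2 : R); have hm := expRxMexpNx_1 (2 : R).
  have pos := expR_gt0 (- 2 : R); clear -h3 hm pos; nra.
have PB : (P B <= (E * expR (-2) + E / 2)%:E)%E.
  apply: le_trans (measureU2 _ _ _) _; [exact: (Ch_m _ _ _ _ _ _ PA _ h0)|exact: (Bad2_m _ _ _ _ _ _ PA _ h0)|].
  by rewrite EFinD; apply: leeD.
rewrite probability_setC //.
have fB : P B \is a fin_num by exact: fin_num_measure.
rewrite -(fineK fB) in PB *; rewrite lee_fin in PB.
rewrite -EFinB lte_fin.
have : E * expR (-2) <= E * (1 / 3) by rewrite ler_pM2l.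
clear -PB E0; lra.
Qed.
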